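(* In the single expert committee under liquid democracy, there is a neutral strategy profile that maximizes the probability that the outcome matches the state among all neutral strategy profiles and under which every nonexpert who does not abstain holds at most one vote.
   Context: Single expert committee: $N$ voters with $N$ odd, all independent (payoff 1 if the outcome matches the state, $A$ with $a$ and $B$ with $b$, else 0); $N-1$ nonexperts of precision $q\in(1/2,1)$ and one expert of precision $r\in(q,1)$; prior $\Pr(\omega=a)=1/2$ for state $\omega\in\{a,b\}$; voter $i$ observes private signal $s_i$ with $\Pr(s_i=\omega\mid\omega)=q_i$, conditionally independent; precisions are common knowledge. Outcome: simple majority of votes cast, ties broken uniformly at random. Liquid democracy: each voter maps her signal to vote $A$, vote $B$, abstain, or delegate to another voter; delegation is transitive, votes in a delegation cycle are abstained, and a non-delegator casts all votes she holds (own plus delegated) for the same alternative or abstains them all. A strategy profile is neutral if each voter votes sincerely ($a$ at signal $a$, $b$ at signal $b$), abstains at both signals, or delegates to the same voter at both signals. The number of votes a voter holds is her own vote (if she does not delegate) plus all votes delegated to her directly or transitively. *)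

(* Defs.v *)
From HB Require Import structures.
From mathcomp Require Import all_boot all_order all_algebra.
Set Implicit Arguments. Unset Strict Implicit. Unset Printing Implicit Defensive.
Import Order.TTheory GRing.Theory Num.Theory.
Local Open Scope ring_scope.

(* A neutral action: vote sincerely (a at signal a, b at signal b),
   abstain (at both signals), or delegate to voter j (at both signals). *)
Inductive act (N : nat) : Type :=
  | Sincere
  | Abstain
  | Deleg of 'I_N.
Arguments Sincere {N}.
Arguments Abstain {N}.

Definition profile (N : nat) := 'I_N -> act N.

Definition valid_profile N (P : profile N) : Prop :=
  forall i j : 'I_N, P i = Deleg j -> j != i.

Definition is_deleg N (a : act N) : bool :=
  if a is Deleg _ then true else false.

Definition deleg_step N (P : profile N) (i : 'I_N) : 'I_N :=
  if P i is Deleg j then j else i.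

(* End of the delegation chain after N steps: a non-delegator if the chain
   terminates, otherwise (cycle) a delegator. *)
Definition guru N (P : profile N) (i : 'I_N) : 'I_N := iter N (deleg_step P) i.

(* What a voter g casts at signal profile s (true = signal a):
   Some true = vote A, Some false = vote B, None = abstained
   (also None for a delegator, which happens only for a delegation cycle). *)
Definition casts N (P : profile N) (s : {ffun 'I_N -> bool}) (g : 'I_N)
  : option bool :=
  match P g with Sincere => Some (s g) | _ => None end.

Definition countA N (P : profile N) (s : {ffun 'I_N -> bool}) : nat :=
  #|[set i : 'I_N | casts P s (guru P i) == Some true]|.
Definition countB N (P : profile N) (s : {ffun 'I_N -> bool}) : nat :=
  #|[set i : 'I_N | casts P s (guru P i) == Some false]|.

(* Probability that the outcome matches the state w (true = a), given the
   signal profile s: simple majority of votes cast, ties broken uniformly. *)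
Definition correct_given {R : realFieldType} N (P : profile N) (w : bool)
  (s : {ffun 'I_N -> bool}) : R :=
  let a := countA P s in let b := countB P s in
  if a == b then 1 / 2%:R else if (b < a)%N == w then 1 else 0.

Definition sig_prob {R : realFieldType} N (prec : 'I_N -> R) (w : bool)
  (s : {ffun 'I_N -> bool}) : R :=
  \prod_(i < N) (if s i == w then prec i else 1 - prec i).

Definition success {R : realFieldType} N (prec : 'I_N -> R) (P : profile N) : R :=
  \sum_(w : bool) (1 / 2%:R) *
    \sum_(s : {ffun 'I_N -> bool}) sig_prob prec w s * correct_given P w s.

Definition sec_prec {R : realFieldType} N (q r : R) (e : 'I_N) (i : 'I_N) : R :=
  if i == e then r else q.

Definition held N (P : profile N) (i : 'I_N) : nat :=
  (if is_deleg (P i) then 0 else 1) +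
  #|[set j : 'I_N | (j != i) && [exists k : 'I_N, iter k.+1 (deleg_step P) j == i]]|.

(* Main.v *)
Require Import Defs.
From HB Require Import structures.
From mathcomp Require Import all_boot all_order all_algebra.
From mathcomp Require Import ring lra zify.
Set Implicit Arguments. Unset Strict Implicit. Unset Printing Implicit Defensive.
Import Order.TTheory GRing.Theory Num.Theory.
Local Open Scope ring_scope.

Section Gen.
Variable R : realFieldType.
Variable N : nat.
Local Notation I := 'I_N.
Local Notation sig := {ffun I -> bool}.

Definition flip (j : I) (s : sig) : sig := [ffun i => if i == j then ~~ s i else s i].

Lemma flipK j : involutive (flip j).
Proof. by move=> s; apply/ffunP => i; rewrite !ffunE; case: (i == j) => //; rewrite negbK. Qed.

Lemma flip_inj j : injective (flip j).
Proof. exact: inv_inj (flipK j). Qed.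

Lemma sum_flip j (F : sig -> R) : \sum_(s : sig) F s = \sum_(s : sig) F (flip j s).
Proof. by rewrite (reindex_inj (@flip_inj j)). Qed.

Lemma half_sum j (g : I -> bool -> R) (k : sig -> R) :
  g j true + g j false = 1 -> (forall s, k (flip j s) = k s) ->
  \sum_(s : sig) (\prod_i g i (s i)) * k s =
  2^-1 * \sum_(s : sig) (\prod_(i | i != j) g i (s i)) * k s.
Proof.
move=> g1 kf.
have E : forall s : sig, (\prod_i g i (s i)) * k s =
   g j (s j) * ((\prod_(i | i != j) g i (s i)) * k s).
  by move=> s; rewrite (bigD1 j) //= mulrA.
under eq_bigr do rewrite E.
set A := \sum_(s : sig) _.
have HA : A = \sum_(s : sig) g j (~~ s j) * ((\prod_(i | i != j) g i (s i)) * k s).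
  rewrite /A (sum_flip j); apply: eq_bigr => s _.
  rewrite kf ffunE eqxx; congr (_ * (_ * _)); apply: eq_bigr => i hi.
  by rewrite ffunE (negbTE hi).
have H2 : A + A = \sum_(s : sig) (\prod_(i | i != j) g i (s i)) * k s.
  rewrite {2}HA -big_split /=; apply: eq_bigr => s _.
  rewrite -mulrDl; case: (s j) => /=; last rewrite addrC; by rewrite g1 mul1r.
rewrite -H2; field; by [].
Qed.

Lemma marg (l : seq I) (g g' : I -> bool -> R) (k : sig -> R) :
  (forall i b, i \notin l -> g i b = g' i b) ->
  (forall i, i \in l -> g i true + g i false = 1 /\ g' i true + g' i false = 1) ->
  (forall i, i \in l -> forall s, k (flip i s) = k s) ->
  \sum_(s : sig) (\prod_i g i (s i)) * k s = \sum_(s : sig) (\prod_i g' i (s i)) * k s.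
Proof.
elim: l g => [|j l IH] g Hout H1 Hk.
  by apply: eq_bigr => s _; congr (_ * _); apply: eq_bigr => i _; rewrite Hout.
pose g1 i b := if i == j then g' j b else g i b.
have Hj : j \in j :: l by rewrite inE eqxx.
have E1 : \sum_(s : sig) (\prod_i g i (s i)) * k s = \sum_(s : sig) (\prod_i g1 i (s i)) * k s.
  rewrite (half_sum (H1 j Hj).1 (Hk j Hj)).
  rewrite (@half_sum j g1 k); first last.
  - exact: Hk.
  - by rewrite /g1 eqxx; exact: (H1 j Hj).2.
  congr (_ * _); apply: eq_bigr => s _; congr (_ * _); apply: eq_bigr => i hi.
  by rewrite /g1 (negbTE hi).
rewrite E1; apply: IH.
- move=> i b hi; rewrite /g1; case: eqP => [->//|/eqP ne].
  by apply: Hout; rewrite inE negb_or ne.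
- move=> i hi; rewrite /g1; case: eqP => [->|_]; first by split; exact: (H1 j Hj).2.
  by apply: H1; rewrite inE hi orbT.
- by move=> i hi; apply: Hk; rewrite inE hi orbT.
Qed.

End Gen.

Fixpoint cmax (ok : nat -> bool) (k : nat) : nat :=
  match k with 0 => 0%N | k'.+1 => if ok k'.+1 then k'.+1 else cmax ok k' end.

Definition cch (ok : nat -> bool) (K m : nat) : nat :=
  let c := cmax ok K in if (c == K) || (odd c != odd m) then c else c.+1.

Section CC.
Variable ok : nat -> bool.
Hypothesis okS : forall j, ok j.+1 -> ok j.
Hypothesis ok1 : ok 1.

Lemma ok_le i j : ok i -> (j <= i)%N -> ok j.
Proof.
elim: i => [|i IH] oki hji; first by move: hji; rewrite leqn0 => /eqP ->.
rewrite leq_eqVlt in hji; case/orP: hji => [/eqP -> //|]; rewrite ltnS; apply: IH.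
exact: okS.
Qed.

Lemma cmax_le k : (cmax ok k <= k)%N.
Proof. elim: k => //= k IH; case: (ok k.+1) => //; exact: leqW. Qed.

Lemma cmax_ok k : ok (cmax ok k).
Proof. elim: k => [|k IH] /=; first exact: okS. by case: ifP. Qed.

Lemma cmax_max k j : (j <= k)%N -> ok j -> (j <= cmax ok k)%N.
Proof.
elim: k => [|k IH] /=; first by rewrite leqn0 => /eqP ->.
case: ifP => okk; first by [].
rewrite leq_eqVlt; case/orP => [/eqP -> |]; first by rewrite okk.
by rewrite ltnS => hj /(IH hj).
Qed.

Lemma cch_spec K m : (1 <= K)%N ->
  [/\ (1 <= cch ok K m)%N, (cch ok K m <= K)%N,
      (forall j, odd j = odd m -> ok j -> (j <= K)%N ->
          (j < cch ok K m)%N \/ (j = cch ok K m /\ cch ok K m = K)) &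
      (forall j, odd j = odd m -> ~~ ok j -> (cch ok K m < j)%N)].
Proof.
move=> K1.
have c1 : (1 <= cmax ok K)%N by apply: cmax_max.
have cK := cmax_le K.
have cok := cmax_ok K.
rewrite /cch; set c := cmax ok K in c1 cK cok *.
case: ifP => H; last first.
  move/negbT: H; rewrite negb_or negbK => /andP [cneK /eqP pc].
  split.
  - by apply: leqW.
  - by rewrite ltn_neqAle cneK cK.
  - move=> j pj okj jK; left; rewrite ltnS; exact: cmax_max.
  - move=> j pj nok.
    have cj : (c < j)%N by rewrite ltnNge; apply/negP => hj; move/negP: nok; apply; exact: ok_le hj.
    rewrite ltn_neqAle cj andbT; apply/eqP => ej.
    by move: pj; rewrite -ej /= pc; case: (odd m).
split => //.
- move=> j pj okj jK.
  have := cmax_max jK okj; rewrite -/c leq_eqVlt => /orP [/eqP ej|]; last by left.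
  case/orP: H => [/eqP cK'|/negP []]; first by right.
  by rewrite -ej pj eqxx.
- move=> j pj nok; rewrite ltnNge; apply/negP => hj; move/negP: nok; apply; exact: ok_le hj.
Qed.
End CC.

Section Core.
Variable R : realFieldType.

Definition fz (t : int) : R := if (0 < t)%R then 1 else if t == 0 then 2^-1 else 0.

Lemma fz1 t : 0 < t -> fz t = 1. Proof. by rewrite /fz => ->. Qed.
Lemma fz0 t : t < 0 -> fz t = 0.
Proof. by rewrite /fz => h; rewrite ltNge ltW //= lt_eqF. Qed.
Lemma fzh : fz 0 = 2^-1. Proof. by []. Qed.
Lemma fz_ge0 t : 0 <= fz t.
Proof. rewrite /fz; case: ifP => _ //; case: ifP => _ //; by rewrite invr_ge0 ler0n. Qed.
Lemma fz_le1 t : fz t <= 1.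
Proof. rewrite /fz; case: ifP => _ //; case: ifP => _ //; by rewrite invf_le1 // ?ler1n ?ltr0n. Qed.
Lemma fz_geh t : 0 <= t -> 2^-1 <= fz t.
Proof.
rewrite le_eqVlt => /orP [/eqP <-|/fz1 ->]; first by rewrite fzh.
by rewrite invf_le1 ?ler1n ?ltr0n.
Qed.
Lemma fz_leh t : t <= 0 -> fz t <= 2^-1.
Proof.
rewrite le_eqVlt => /orP [/eqP ->|/fz0 ->]; first by rewrite fzh.
by rewrite invr_ge0 ler0n.
Qed.

Lemma core_pos (al be : R) (d W a c K j : int) (b : bool) :
  d - (K - a) <= W -> W <= d + (K - a) ->
  1 <= c -> c <= K -> 0 <= j ->
  (b -> j <= K -> j < c \/ (j = c /\ c = K)) ->
  (~~ b -> c < j) ->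
  ((d = j /\ 0 <= al /\ (b -> be <= 0) /\ (~~ b -> 0 <= be)) \/
   (d = - j /\ be <= 0 /\ (b -> 0 <= al) /\ (~~ b -> al <= 0))) ->
  fz (W + a) * al + fz (W - a) * be <= fz (d + c) * al + fz (d - c) * be.
Proof.
move=> HW1 HW2 c1 cK j0 P2 P3 [[dj [al0 [bbe nbbe]]]|[dj [be0 [bal nbal]]]].
- apply: lerD.
    by rewrite (fz1 (t := d + c)) ?dj; [apply: ler_wpM2r => //; apply: fz_le1 | lia].
  case: b P2 P3 bbe nbbe => P2 P3 bbe nbbe; last first.
    by rewrite (fz1 (t := d - c)); [apply: ler_wpM2r => //; [apply: nbbe | apply: fz_le1] | lia].
  apply: ler_wnM2r; first exact: bbe.
  case: (lerP j K) => jK.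
    case: (P2 isT jK) => [jc|[jc cKe]].
      by rewrite fz0 ?fz_ge0 //; lia.
    rewrite (_ : d - c = 0); last by lia.
    by rewrite fzh fz_geh //; lia.
  by rewrite !fz1 //; lia.
- apply: lerD; last first.
    rewrite (fz0 (t := d - c)); last by lia.
    by rewrite mul0r mulr_ge0_le0 // fz_ge0.
  case: b P2 P3 bal nbal => P2 P3 bal nbal; last first.
    rewrite (fz0 (t := d + c)); last by have := P3 isT; lia.
    by rewrite mul0r mulr_ge0_le0 ?fz_ge0 ?nbal.
  apply: ler_wpM2r; first exact: bal.
  case: (lerP j K) => jK.
    case: (P2 isT jK) => [jc|[jc cKe]].
      by rewrite (fz1 (t := d + c)) ?fz_le1 //; lia.
    rewrite (_ : d + c = 0); last by lia.
    by rewrite fzh fz_leh //; lia.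
  by rewrite (fz0 (t := W + a)) ?fz_ge0 //; lia.
Qed.

Lemma core_zero (u v : R) (d W : int) :
  (0 < d -> v <= u) -> (d < 0 -> u <= v) -> (d = 0 -> u = v) ->
  u * fz W + v * (1 - fz W) <= u * fz d + v * (1 - fz d).
Proof.
move=> h1 h2 h3.
have f0 := fz_ge0 W; have f1 := fz_le1 W.
case: (ltgtP d 0) => hd.
- rewrite (fz0 hd) -subr_ge0.
  have -> : u * 0 + v * (1 - 0) - (u * fz W + v * (1 - fz W)) = (v - u) * fz W by ring.
  by rewrite mulr_ge0 // subr_ge0 (h2 hd).
- rewrite (fz1 hd) -subr_ge0.
  have -> : u * 1 + v * (1 - 1) - (u * fz W + v * (1 - fz W)) = (u - v) * (1 - fz W) by ring.
  by rewrite mulr_ge0 // subr_ge0 ?(h1 hd).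
- by rewrite hd (h3 hd) -mulrDr addrC subrK -mulrDr addrC subrK.
Qed.

End Core.

Section QR.
Variable R : realFieldType.
Variables q r : R.
Hypotheses (hq : 2^-1 < q) (hq1 : q < 1) (hqr : q < r) (hr1 : r < 1).

Ltac hy := pose proof hq; pose proof hq1; pose proof hqr; pose proof hr1.

Definition okq (j : nat) : bool := (1 - r) * q ^+ j <= r * (1 - q) ^+ j.

Lemma q_facts : 0 < 1 - q /\ 1 - q < q /\ 0 < q /\ 1 - r < r /\ 0 < 1 - r.
Proof.
hy; by split; [|split; [|split; [|split]]]; lra.
Qed.

Lemma pow_facts j : 0 <= (1 - q) ^+ j /\ (1 - q) ^+ j <= q ^+ j.
Proof.
have [h1 [h2 [h3 _]]] := q_facts.
split; first by rewrite exprn_ge0 // ltW.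
by rewrite lerXn2r // ?nnegrE ltW.
Qed.

Lemma okqS j : okq j.+1 -> okq j.
Proof.
have [h1 [h2 [h3 [h4 h5]]]] := q_facts.
have [P0 PQ] := pow_facts j.
rewrite /okq !exprS.
set A := q ^+ j; set B := (1 - q) ^+ j.
have B0 : 0 <= B by [].
have A0 : 0 <= A by apply: le_trans PQ.
move=> H.
have rB : 0 <= r * B by apply: mulr_ge0 => //; lra.
have H1 : (1 - q) * (r * B) <= q * (r * B) by apply: ler_wpM2r => //; apply: ltW.
have H2 : q * ((1 - r) * A) <= q * (r * B).
  apply: le_trans H1.
  have -> : q * ((1 - r) * A) = (1 - r) * (q * A) by ring.
  have -> : (1 - q) * (r * B) = r * ((1 - q) * B) by ring.
  exact: H.
by rewrite ler_pM2l // in H2.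
Qed.

Lemma okq1 : okq 1.
Proof. hy. rewrite /okq !expr1. nra. Qed.

Lemma uv1 (Y : R) j : 0 <= Y ->
  0 <= r * (Y * q ^+ j) - (1 - r) * (Y * (1 - q) ^+ j) /\
  (okq j -> (1 - r) * (Y * q ^+ j) - r * (Y * (1 - q) ^+ j) <= 0) /\
  (~~ okq j -> 0 <= (1 - r) * (Y * q ^+ j) - r * (Y * (1 - q) ^+ j)).
Proof.
move=> Y0.
have [h1 [h2 [h3 [h4 h5]]]] := q_facts.
have [P0 PQ] := pow_facts j.
rewrite /okq.
set A := q ^+ j; set B := (1 - q) ^+ j.
have -> : r * (Y * A) - (1 - r) * (Y * B) = Y * (r * A - (1 - r) * B) by ring.
have -> : (1 - r) * (Y * A) - r * (Y * B) = Y * ((1 - r) * A - r * B) by ring.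
have r0 : 0 <= r by lra.
split.
  apply: mulr_ge0 => //; rewrite subr_ge0; apply: (@le_trans _ _ (r * B)).
    by apply: ler_wpM2r => //; apply: ltW.
  by apply: ler_wpM2l.
split; first by move=> H; apply: mulr_ge0_le0 => //; rewrite subr_le0.
by rewrite -ltNge => H; apply: mulr_ge0 => //; rewrite subr_ge0 ltW.
Qed.

Lemma uv2 (Y : R) j : 0 <= Y ->
  (1 - r) * (Y * (1 - q) ^+ j) - r * (Y * q ^+ j) <= 0 /\
  (okq j -> 0 <= r * (Y * (1 - q) ^+ j) - (1 - r) * (Y * q ^+ j)) /\
  (~~ okq j -> r * (Y * (1 - q) ^+ j) - (1 - r) * (Y * q ^+ j) <= 0).
Proof.
move=> Y0.
have [h1 [h2 [h3 [h4 h5]]]] := q_facts.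
have [P0 PQ] := pow_facts j.
rewrite /okq.
set A := q ^+ j; set B := (1 - q) ^+ j.
have -> : r * (Y * B) - (1 - r) * (Y * A) = Y * (r * B - (1 - r) * A) by ring.
have -> : (1 - r) * (Y * B) - r * (Y * A) = Y * ((1 - r) * B - r * A) by ring.
have r0 : 0 <= r by lra.
split.
  apply: mulr_ge0_le0 => //; rewrite subr_le0; apply: (@le_trans _ _ (r * B)).
    by apply: ler_wpM2r => //; apply: ltW.
  by apply: ler_wpM2l.
split; first by move=> H; apply: mulr_ge0 => //; rewrite subr_ge0.
by rewrite -ltNge => H; apply: mulr_ge0_le0 => //; rewrite subr_le0 ltW.
Qed.
End QR.

Section W.
Variable R : realFieldType.
Variable N : nat.
Local Notation I := 'I_N.
Local Notation sig := {ffun I -> bool}.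

Definition cA (wt : I -> nat) (s : sig) : nat := (\sum_g wt g * s g)%N.
Definition cB (wt : I -> nat) (s : sig) : nat := (\sum_g wt g * ~~ s g)%N.
Definition cgW (wt : I -> nat) (w : bool) (s : sig) : R :=
  let a := cA wt s in let b := cB wt s in
  if a == b then 1 / 2%:R else if (b < a)%N == w then 1 else 0.
Definition successW (prec : I -> R) wt : R :=
  \sum_(w : bool) (1 / 2%:R) * \sum_(s : sig) sig_prob prec w s * cgW wt w s.
Definition sg (b : bool) : int := if b then 1 else -1.
Definition Dsc (wt : I -> nat) (s : sig) : int := \sum_g (wt g)%:Z * sg (s g).

Lemma Dsc_eq wt s : Dsc wt s = (cA wt s)%:Z - (cB wt s)%:Z.
Proof.
rewrite /Dsc /cA /cB !(big_morph Posz PoszD (erefl _)) -sumrB.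
by apply: eq_bigr => g _; case: (s g) => /=; rewrite ?muln1 ?muln0 ?subr0 ?sub0r ?mulrN1 ?mulr1.
Qed.

Lemma cgW_true wt s : cgW wt true s = fz R (Dsc wt s).
Proof.
rewrite /cgW Dsc_eq /fz; case: eqP => [->|ne]; first by rewrite subrr ltxx eqxx div1r.
case: ltnP => h /=.
  by rewrite subr_gt0 ltz_nat h.
rewrite subr_gt0 ltz_nat ltnNge h /= subr_eq0; case: eqP => // [[]] //.
Qed.

Lemma cgW_false wt s : cgW wt false s = 1 - fz R (Dsc wt s).
Proof.
rewrite -cgW_true /cgW; case: eqP => _; first by rewrite div1r; field.
by case: ltnP => _ /=; rewrite ?subrr ?subr0.
Qed.

Lemma cA_flip wt j s : wt j = 0%N -> cA wt (flip j s) = cA wt s.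
Proof.
move=> h; rewrite /cA; apply: eq_bigr => g _; rewrite ffunE; case: eqP => [->|//].
by rewrite h !mul0n.
Qed.

Lemma cB_flip wt j s : wt j = 0%N -> cB wt (flip j s) = cB wt s.
Proof.
move=> h; rewrite /cB; apply: eq_bigr => g _; rewrite ffunE; case: eqP => [->|//].
by rewrite h !mul0n.
Qed.

Lemma cgW_flip wt w j s : wt j = 0%N -> cgW wt w (flip j s) = cgW wt w s.
Proof. by move=> h; rewrite /cgW cA_flip // cB_flip. Qed.

Definition mu (prec : I -> R) (T : {set I}) (w : bool) (s : sig) : R :=
  \prod_i (if i \in T then (if s i == w then prec i else 1 - prec i) else 2^-1).

Lemma successW_marg (prec : I -> R) (T : {set I}) (wt : I -> nat) : (forall g, g \notin T -> wt g = 0%N) ->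
  successW prec wt = \sum_(s : sig) \sum_(w : bool) (1 / 2%:R) * (mu prec T w s * cgW wt w s).
Proof.
move=> hT; rewrite /successW.
rewrite [RHS]exchange_big /=; apply: eq_bigr => w _; rewrite -mulr_sumr; congr (_ * _).
rewrite /sig_prob /mu.
apply: (@marg R N (enum (~: T)) (fun i b => if b == w then prec i else 1 - prec i)
  (fun i b => if i \in T then (if b == w then prec i else 1 - prec i) else 2^-1) (cgW wt w)).
- by move=> i b; rewrite mem_enum inE negbK => ->.
- move=> i; rewrite mem_enum inE => /negbTE ->; split; last by field.
  by case: w => /=; rewrite ?subrK // addrC subrK.
- by move=> i; rewrite mem_enum inE => hi s; apply: cgW_flip; apply: hT.
Qed.


Lemma pair_le (e : I) (X Y : sig -> R) :
  (forall s : sig, s e -> X s + X (flip e s) <= Y s + Y (flip e s)) ->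
  \sum_(s : sig) X s <= \sum_(s : sig) Y s.
Proof.
move=> H.
have H' : forall s : sig, X s + X (flip e s) <= Y s + Y (flip e s).
  move=> s; case hs: (s e); first exact: H.
  have := H (flip e s); rewrite flipK ffunE eqxx hs => /(_ isT).
  by rewrite (addrC (X _)) (addrC (Y _)).
have E : forall Z : sig -> R, \sum_(s : sig) Z s + \sum_(s : sig) Z s =
   \sum_(s : sig) (Z s + Z (flip e s)).
  by move=> Z; rewrite {2}(sum_flip e) big_split.
have : \sum_(s : sig) X s + \sum_(s : sig) X s <= \sum_(s : sig) Y s + \sum_(s : sig) Y s.
  by rewrite !E; apply: ler_sum => s _; apply: H'.
lra.
Qed.

Definition Mq (q : R) (e : I) (T : {set I}) (w : bool) (s : sig) : R :=
  \prod_(i | i != e) (if i \in T then (if s i == w then q else 1 - q) else 2^-1).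

Lemma mu_split (q r : R) (e : I) (T : {set I}) w s : e \in T ->
  mu (sec_prec q r e) T w s = (if s e == w then r else 1 - r) * Mq q e T w s.
Proof.
move=> eT; rewrite /mu (bigD1 e) //= eT /sec_prec eqxx; congr (_ * _).
by apply: eq_bigr => i /negbTE ie; rewrite ie.
Qed.

Lemma Mq_flip q e T w s : Mq q e T w (flip e s) = Mq q e T w s.
Proof. by apply: eq_bigr => i /negbTE ie; rewrite ffunE ie. Qed.

Definition pc (e : I) (T : {set I}) (s : sig) : nat := #|[pred i | (i != e) && (i \in T) && s i]|.
Definition nc (e : I) (T : {set I}) (s : sig) : nat := #|[pred i | (i != e) && (i \in T) && ~~ s i]|.
Definition zc (e : I) (T : {set I}) : nat := #|[pred i | (i != e) && (i \notin T)]|.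

Lemma Mq_eq q e T w s : Mq q e T w s =
  (if w then q else 1 - q) ^+ pc e T s * (if w then 1 - q else q) ^+ nc e T s * 2^-1 ^+ zc e T.
Proof.
rewrite /Mq (bigID (fun i => i \in T)) /=.
rewrite (bigID (fun i => s i)) /=.
rewrite /pc /nc /zc -!prodr_const.
congr (_ * _ * _).
- by apply: eq_big => [i|i /andP [/andP [_ ->] ->]]; [by rewrite inE|case: w].
- by apply: eq_big => [i|i /andP [/andP [_ ->] /negbTE ->]]; [by rewrite inE|case: w].
- by apply: eq_big => [i|i /andP [_ /negbTE ->]] //; rewrite inE.
Qed.

Definition val (r u v h h' : R) : R :=
  r * u * h + (1 - r) * v * (1 - h) + (1 - r) * u * h' + r * v * (1 - h').

Definition Xs (prec : I -> R) T wt (s : sig) : R :=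
  \sum_(w : bool) (1 / 2%:R) * (mu prec T w s * cgW wt w s).

Lemma Xs_pair (q r : R) (e : I) (T : {set I}) (wt : I -> nat) (s : sig) : e \in T -> s e ->
  Xs (sec_prec q r e) T wt s + Xs (sec_prec q r e) T wt (flip e s) =
  2^-1 * val r (Mq q e T true s) (Mq q e T false s) (fz R (Dsc wt s)) (fz R (Dsc wt (flip e s))).
Proof.
move=> eT se; rewrite /Xs !big_bool /= !cgW_true !cgW_false !mu_split //.
rewrite !Mq_flip ffunE eqxx se /= /val; by field.
Qed.

Definition Wsum (e : I) (wt : I -> nat) (s : sig) : int :=
  \sum_(g | g != e) (wt g)%:Z * sg (s g).

Lemma Dsc_split e wt s : Dsc wt s = (wt e)%:Z * sg (s e) + Wsum e wt s.
Proof. by rewrite /Dsc (bigD1 e). Qed.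

Lemma Wsum_flip e wt s : Wsum e wt (flip e s) = Wsum e wt s.
Proof. by apply: eq_bigr => i /negbTE ie; rewrite ffunE ie. Qed.

End W.

Section HP.
Variable R : realFieldType.
Variables q r : R.
Hypotheses (hq : 2^-1 < q) (hq1 : q < 1) (hqr : q < r) (hr1 : r < 1).

Lemma val_eq (u v h h' : R) : val r u v h h' =
  v + (h * (r * u - (1 - r) * v) + h' * ((1 - r) * u - r * v)).
Proof. rewrite /val; ring. Qed.

Lemma qpos : 0 <= q /\ 0 <= 1 - q.
Proof. have [h1 [h2 [h3 _]]] := q_facts hq hq1 hqr hr1. by split; apply: ltW. Qed.

Lemma helper_pos (Z : R) (p n a c K m : nat) (W : int) :
  0 <= Z -> (p + n)%N = m -> (1 <= c)%N -> (c <= K)%N ->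
  (forall j, odd j = odd m -> okq q r j -> (j <= K)%N -> (j < c)%N \/ (j = c /\ c = K)) ->
  (forall j, odd j = odd m -> ~~ okq q r j -> (c < j)%N) ->
  `|W - (p%:Z - n%:Z)| <= K%:Z - a%:Z ->
  val r (q ^+ p * (1 - q) ^+ n * Z) ((1 - q) ^+ p * q ^+ n * Z)
      (fz R (W + a%:Z)) (fz R (W - a%:Z)) <=
  val r (q ^+ p * (1 - q) ^+ n * Z) ((1 - q) ^+ p * q ^+ n * Z)
      (fz R ((p%:Z - n%:Z) + c%:Z)) (fz R ((p%:Z - n%:Z) - c%:Z)).
Proof.
move=> Z0 hm c1 cK P2 P3 HW.
have [HW1 HW2] : (p%:Z - n%:Z) - (K%:Z - a%:Z) <= W /\ W <= (p%:Z - n%:Z) + (K%:Z - a%:Z).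
  by move: HW; rewrite ler_norml => /andP [h1 h2]; split; lia.
have [q0 q1] := qpos.
rewrite !val_eq lerD2l.
case: (leqP n p) => hnp.
- have [j hj] : exists j, p = (n + j)%N by exists (p - n)%N; rewrite subnKC.
  set Y := q ^+ n * (1 - q) ^+ n * Z.
  have Y0 : 0 <= Y by rewrite /Y !mulr_ge0 // exprn_ge0.
  have [al0 [bo nbo]] := uv1 hq hq1 hqr hr1 j Y0.
  have Hu : q ^+ p * (1 - q) ^+ n * Z = Y * q ^+ j by rewrite /Y hj exprD; ring.
  have Hv : (1 - q) ^+ p * q ^+ n * Z = Y * (1 - q) ^+ j by rewrite /Y hj exprD; ring.
  have par : odd j = odd m by rewrite -hm hj addnAC addnn oddD odd_double.
  rewrite Hu Hv.
  apply: (@core_pos R _ _ (p%:Z - n%:Z) W a%:Z c%:Z K%:Z j%:Z (okq q r j)) => //.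
  + move=> b jK; have := P2 j par b; rewrite -lez_nat => /(_ jK) [h|[h1 h2]].
      by left; rewrite ltz_nat; exact: h.
    by right; rewrite h1 h2.
  + by move=> nb; rewrite ltz_nat; apply: P3.
  + left; split; first by rewrite hj PoszD addrC addKr.
    by split; [exact: al0 | split; [exact: bo | exact: nbo]].
- have [j hj] : exists j, n = (p + j)%N by exists (n - p)%N; rewrite subnKC // ltnW.
  set Y := q ^+ p * (1 - q) ^+ p * Z.
  have Y0 : 0 <= Y by rewrite /Y !mulr_ge0 // exprn_ge0.
  have [be0 [ao nao]] := uv2 hq hq1 hqr hr1 j Y0.
  have Hu : q ^+ p * (1 - q) ^+ n * Z = Y * (1 - q) ^+ j by rewrite /Y hj exprD; ring.
  have Hv : (1 - q) ^+ p * q ^+ n * Z = Y * q ^+ j by rewrite /Y hj exprD; ring.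
  have par : odd j = odd m by rewrite -hm hj addnA addnn oddD odd_double.
  rewrite Hu Hv.
  apply: (@core_pos R _ _ (p%:Z - n%:Z) W a%:Z c%:Z K%:Z j%:Z (okq q r j)) => //.
  + move=> b jK; have := P2 j par b; rewrite -lez_nat => /(_ jK) [h|[h1 h2]].
      by left; rewrite ltz_nat; exact: h.
    by right; rewrite h1 h2.
  + by move=> nb; rewrite ltz_nat; apply: P3.
  + right; split; first by rewrite hj PoszD opprD addrA subrr sub0r.
    by split; [exact: be0 | split; [exact: ao | exact: nao]].
Qed.

Lemma helper_zero (Z : R) (p n : nat) (W : int) : 0 <= Z ->
  val r (q ^+ p * (1 - q) ^+ n * Z) ((1 - q) ^+ p * q ^+ n * Z) (fz R W) (fz R W) <=
  val r (q ^+ p * (1 - q) ^+ n * Z) ((1 - q) ^+ p * q ^+ n * Z)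
      (fz R (p%:Z - n%:Z)) (fz R (p%:Z - n%:Z)).
Proof.
move=> Z0.
have [q0 q1] := qpos.
have E : forall u v h : R, val r u v h h = u * h + v * (1 - h) by move=> *; rewrite /val; ring.
rewrite !E; apply: core_zero.
- move=> hd; have hnp : (n <= p)%N by rewrite -lez_nat; lia.
  have [j hj] : exists j, p = (n + j)%N by exists (p - n)%N; rewrite subnKC.
  rewrite hj !exprD.
  have [P0 PQ] := pow_facts hq hq1 hqr hr1 j.
  have Y0 : 0 <= q ^+ n * (1 - q) ^+ n * Z by rewrite !mulr_ge0 // exprn_ge0.
  have -> : q ^+ n * q ^+ j * (1 - q) ^+ n * Z = (q ^+ n * (1 - q) ^+ n * Z) * q ^+ j by ring.
  have -> : (1 - q) ^+ n * (1 - q) ^+ j * q ^+ n * Z = (q ^+ n * (1 - q) ^+ n * Z) * (1 - q) ^+ j by ring.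
  by apply: ler_wpM2l.
- move=> hd; have hnp : (p <= n)%N by rewrite -lez_nat; lia.
  have [j hj] : exists j, n = (p + j)%N by exists (n - p)%N; rewrite subnKC.
  rewrite hj !exprD.
  have [P0 PQ] := pow_facts hq hq1 hqr hr1 j.
  have Y0 : 0 <= q ^+ p * (1 - q) ^+ p * Z by rewrite !mulr_ge0 // exprn_ge0.
  have -> : q ^+ p * ((1 - q) ^+ p * (1 - q) ^+ j) * Z = (q ^+ p * (1 - q) ^+ p * Z) * (1 - q) ^+ j by ring.
  have -> : (1 - q) ^+ p * (q ^+ p * q ^+ j) * Z = (q ^+ p * (1 - q) ^+ p * Z) * q ^+ j by ring.
  by apply: ler_wpM2l.
- move=> hd; have -> : p = n by apply/eqP; rewrite -eqz_nat; apply/eqP; lia.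
  ring.
Qed.
End HP.

Section WM.
Variable R : realFieldType.
Variable N : nat.
Local Notation I := 'I_N.
Local Notation sig := {ffun I -> bool}.
Variables (q r : R) (e : I) (wt : I -> nat) (V : {set I}).
Hypotheses (hq : 2^-1 < q) (hq1 : q < 1) (hqr : q < r) (hr1 : r < 1).
Hypothesis H1 : forall g, g \notin V -> wt g = 0%N.
Hypothesis H2 : forall g, g \in V -> (1 <= wt g)%N.
Hypothesis H3 : (\sum_g wt g <= N)%N.

Let T := V :|: [set e].
Let m := #|[pred i | (i != e) && (i \in T)]|.
Let K := (N - m)%N.
Let c := if e \in V then cch (okq q r) K m else 0%N.
Let wtG (g : I) : nat := if g == e then c else (g \in T : nat).

Lemma sum_ind_m : (\sum_(g | g != e) ((g \in T) : nat) = m)%N.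
Proof.
rewrite -big_mkcondr /= sum1_card; apply: eq_card => i; by rewrite inE.
Qed.

Lemma m_lt : (m < N)%N.
Proof.
rewrite /m -[X in (_ < X)%N]card_ord; apply: proper_card; apply/properP; split.
  by apply/subsetP => i.
by exists e; rewrite // inE eqxx.
Qed.

Lemma pn_m s : (pc e T s + nc e T s = m)%N.
Proof.
rewrite /pc /nc /m -(cardID (fun i => s i) [pred i | (i != e) && (i \in T)]).
by congr (_ + _); apply: eq_card => i; rewrite !inE andbC.
Qed.

Lemma sum_sg_le (P : pred I) (x : I -> int) (s : sig) : (forall g, P g -> 0 <= x g) ->
  `|\sum_(g | P g) x g * sg (s g)| <= \sum_(g | P g) x g.
Proof.
move=> hx; apply: le_trans (ler_norm_sum _ _ _) _; apply: ler_sum => g Pg.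
by rewrite normrM; case: (s g); rewrite /sg ?normrN normr1 mulr1 ger0_norm ?hx.
Qed.

Lemma dd_eq s : Wsum e wtG s = (pc e T s)%:Z - (nc e T s)%:Z.
Proof.
rewrite /Wsum /pc /nc.
have -> : \sum_(g | g != e) (wtG g)%:Z * sg (s g) =
          \sum_(g | (g != e) && (g \in T)) sg (s g).
  rewrite big_mkcondr /=; apply: eq_bigr => g /negbTE ge.
  by rewrite /wtG ge; case: (g \in T); rewrite ?mul1r ?mul0r.
rewrite (bigID (fun g => s g)) /=.
rewrite (eq_bigr (fun _ => 1)); last by move=> g /andP [_ ->].
rewrite [X in _ + X](eq_bigr (fun _ => -1)); last by move=> g /andP [_ /negbTE ->].
rewrite !sumr_const mulNrn; congr (_ - _).
all: rewrite natz; congr Posz; apply: eq_card => i; by rewrite !inE.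
Qed.


Lemma sum_wtG_m : (\sum_(g | g != e) wtG g = m)%N.
Proof.
rewrite -sum_ind_m; apply: eq_bigr => g /negbTE ge; by rewrite /wtG ge.
Qed.

Lemma W_bound s : `|Wsum e wt s - Wsum e wtG s| <= K%:Z - (wt e)%:Z.
Proof.
have E0 : Wsum e wt s - Wsum e wtG s =
   \sum_(g | g != e) ((wt g)%:Z - (wtG g)%:Z) * sg (s g).
  by rewrite /Wsum -sumrB; apply: eq_bigr => g _; rewrite mulrBl.
have E1 : \sum_(g | g != e) ((wt g)%:Z - (wtG g)%:Z) =
   (\sum_(g | g != e) wt g)%N%:Z - (\sum_(g | g != e) wtG g)%N%:Z.
  by rewrite !(big_morph Posz PoszD (erefl _)) sumrB.
have HS : ((\sum_(g | g != e) wt g) + wt e <= N)%N.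
  by have := H3; rewrite (bigD1 e) //= addnC.
have hm := m_lt.
have Hx : forall g, g != e -> 0 <= (wt g)%:Z - (wtG g)%:Z.
  move=> g /negbTE ge; rewrite /wtG ge subr_ge0 lez_nat.
  case hg: (g \in T) => //=; apply: H2.
  by move: hg; rewrite /T !inE ge orbF.
rewrite E0; apply: le_trans (sum_sg_le s Hx) _.
rewrite E1 sum_wtG_m /K.
move: HS; set S := (\sum_(g | g != e) wt g)%N => HS.
lia.
Qed.

Lemma pointwise (s : sig) : s e ->
  val r (Mq q e T true s) (Mq q e T false s) (fz R (Dsc wt s)) (fz R (Dsc wt (flip e s)))
  <= val r (Mq q e T true s) (Mq q e T false s) (fz R (Dsc wtG s)) (fz R (Dsc wtG (flip e s))).
Proof.
move=> se.
have HW := W_bound s; rewrite dd_eq in HW.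
have fe : flip e s e = false by rewrite ffunE eqxx se.
have E1 : Dsc wt s = Wsum e wt s + (wt e)%:Z by rewrite (Dsc_split e) se /sg mulr1 addrC.
have E2 : Dsc wt (flip e s) = Wsum e wt s - (wt e)%:Z.
  by rewrite (Dsc_split e) fe /sg Wsum_flip mulrN1 addrC.
have E3 : Dsc wtG s = ((pc e T s)%:Z - (nc e T s)%:Z) + c%:Z.
  by rewrite (Dsc_split e) dd_eq se /sg {1}/wtG eqxx mulr1 addrC.
have E4 : Dsc wtG (flip e s) = ((pc e T s)%:Z - (nc e T s)%:Z) - c%:Z.
  by rewrite (Dsc_split e) Wsum_flip dd_eq fe /sg {1}/wtG eqxx mulrN1 addrC.
rewrite E1 E2 E3 E4 !Mq_eq /=.
have Z0 : 0 <= (2^-1 : R) ^+ zc e T by rewrite exprn_ge0 // invr_ge0 ler0n.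
case: (boolP (e \in V)) => eV.
- have hc : c = cch (okq q r) K m by rewrite /c eV.
  have K1 : (1 <= K)%N by rewrite /K subn_gt0 m_lt.
  have [c1 cK P2 P3] := cch_spec (okqS hq hq1 hqr hr1) (okq1 hq hq1 hqr hr1) m K1.
  rewrite -hc in c1 cK P2 P3.
  apply: (@helper_pos R q r hq hq1 hqr hr1 _ (pc e T s) (nc e T s) (wt e) c K m (Wsum e wt s)) => //.
  exact: pn_m.
- have hc : c = 0%N by rewrite /c (negbTE eV).
  have ha : wt e = 0%N by apply: H1.
  rewrite hc ha (_ : Posz 0%N = 0) // !addr0.
  exact: (@helper_zero R q r hq hq1 hqr hr1).
Qed.

Lemma weight_main : successW (sec_prec q r e) wt <= successW (sec_prec q r e) wtG.
Proof.
have eT : e \in T by rewrite /T !inE eqxx orbT.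
rewrite (@successW_marg R N _ T wt); last first.
  by move=> g; rewrite /T !inE negb_or => /andP [gV _]; apply: H1.
rewrite (@successW_marg R N _ T wtG); last first.
  move=> g hg; rewrite /wtG (negbTE hg).
  by have -> : (g == e) = false by apply/negbTE; apply: contraNneq hg => ->.
apply: (@pair_le R N e (Xs (sec_prec q r e) T wt) (Xs (sec_prec q r e) T wtG)) => s se.
rewrite !Xs_pair //; apply: ler_wpM2l; first by rewrite invr_ge0 ler0n.
exact: pointwise.
Qed.

End WM.

Lemma fin_max (R : realFieldType) (T : finType) (x0 : T) (F : T -> R) :
  exists x, forall y, F y <= F x.
Proof.
suff : forall l : seq T, exists x, forall y, y \in l -> F y <= F x.
  by case/(_ (enum T)) => x hx; exists x => y; apply: hx; rewrite mem_enum.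
elim=> [|a l [x hx]]; first by exists x0.
case: (leP (F a) (F x)) => h.
  by exists x => y; rewrite inE => /orP [/eqP ->|/hx].
exists a => y; rewrite inE => /orP [/eqP ->//|/hx hy]; apply: le_trans hy (ltW h).
Qed.

Lemma subset_card (T : finType) (A : {set T}) k : (k <= #|A|)%N ->
  exists B : {set T}, B \subset A /\ #|B| = k.
Proof.
elim: k => [|k IH] hk; first by exists set0; rewrite sub0set cards0.
have [B [BA cB]] := IH (ltnW hk).
have : (0 < #|A :\: B|)%N by rewrite cardsD (setIidPr BA) cB subn_gt0.
case/card_gt0P => x; rewrite inE => /andP [xB xA].
exists (x |: B); split; first by rewrite subUset sub1set xA BA.
by rewrite cardsU1 xB cB.
Qed.

Section Prof.
Variable R : realFieldType.
Variable N : nat.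
Local Notation I := 'I_N.
Local Notation sig := {ffun I -> bool}.

Definition isS (a : act N) : bool := if a is Sincere then true else false.

Definition wtP (P : profile N) (g : I) : nat :=
  if isS (P g) then #|[set i | guru P i == g]| else 0%N.

Lemma sum_guru (P : profile N) (X : I -> nat) :
  (\sum_i X (guru P i) = \sum_g #|[set i | guru P i == g]| * X g)%N.
Proof.
rewrite (partition_big (guru P) predT) //=; apply: eq_bigr => g _.
rewrite (eq_bigr (fun _ => X g)); last by move=> i /eqP ->.
rewrite sum_nat_const; congr (_ * _)%N; apply: eq_card => i; by rewrite !inE.
Qed.

Lemma card_sum (C : pred I) : #|[set i | C i]| = (\sum_i C i)%N.
Proof.
rewrite -sum1_card big_mkcond /=; apply: eq_bigr => i _; rewrite inE; by case: (C i).
Qed.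

Lemma countA_eq (P : profile N) s : countA P s = cA (wtP P) s.
Proof.
rewrite /countA card_sum.
rewrite (eq_bigr (fun i => (isS (P (guru P i)) && s (guru P i) : nat))); last first.
  by move=> i _; rewrite /casts; case: (P (guru P i)) => //=; case: (s (guru P i)).
rewrite (sum_guru P (fun g => (isS (P g) && s g : nat))) /cA; apply: eq_bigr => g _.
by rewrite /wtP; case: (isS _); rewrite ?muln0.
Qed.

Lemma countB_eq (P : profile N) s : countB P s = cB (wtP P) s.
Proof.
rewrite /countB card_sum.
rewrite (eq_bigr (fun i => (isS (P (guru P i)) && ~~ s (guru P i) : nat))); last first.
  by move=> i _; rewrite /casts; case: (P (guru P i)) => //=; case: (s (guru P i)).
rewrite (sum_guru P (fun g => (isS (P g) && ~~ s g : nat))) /cB; apply: eq_bigr => g _.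
by rewrite /wtP; case: (isS _); rewrite ?muln0.
Qed.

Lemma success_eq (prec : I -> R) (P : profile N) : success prec P = successW prec (wtP P).
Proof.
rewrite /success /successW; apply: eq_bigr => w _; congr (_ * _); apply: eq_bigr => s _.
by rewrite /correct_given /cgW countA_eq countB_eq.
Qed.

Lemma successW_ext (prec : I -> R) wt1 wt2 : wt1 =1 wt2 -> successW prec wt1 = successW prec wt2.
Proof.
move=> h.
have hA : forall s, cA wt1 s = cA wt2 s by move=> s; apply: eq_bigr => g _; rewrite h.
have hB : forall s, cB wt1 s = cB wt2 s by move=> s; apply: eq_bigr => g _; rewrite h.
rewrite /successW; apply: eq_bigr => w _; congr (_ * _); apply: eq_bigr => s _.
by rewrite /cgW hA hB.
Qed.

Lemma iter_fix (f : I -> I) x k : f x = x -> iter k f x = x.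
Proof. by move=> h; elim: k => //= k ->. Qed.

Lemma guru_S (P : profile N) g : isS (P g) -> guru P g = g.
Proof.
move=> h; apply: iter_fix; rewrite /deleg_step; by case: (P g) h.
Qed.

Lemma wtP_props (P : profile N) :
  let V := [set g | isS (P g)] in
  [/\ (forall g, g \notin V -> wtP P g = 0%N),
      (forall g, g \in V -> (0 < wtP P g)%N) &
      (\sum_g wtP P g <= N)%N].
Proof.
split.
- by move=> g; rewrite inE /wtP => /negbTE ->.
- move=> g; rewrite inE /wtP => h; rewrite h; apply/card_gt0P; exists g.
  by rewrite inE guru_S.
- apply: (@leq_trans (\sum_g #|[set i | guru P i == g]|)).
    by apply: leq_sum => g _; rewrite /wtP; case: (isS _).
  have := sum_guru P (fun _ => 1%N); rewrite sum1_card card_ord.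
  under [X in (_ = X)%N -> _]eq_bigr do rewrite muln1.
  by move=> <-.
Qed.


Variable e : I.

Definition Gp (S D : {set I}) : profile N := fun i =>
  if i \in S then Sincere else if (e \in S) && (i \in D) then Deleg e else Abstain.

Lemma Gp_valid S D : valid_profile (Gp S D).
Proof.
move=> i j; rewrite /Gp; case: ifP => // iS; case: ifP => // /andP [eS _] [<-].
by apply/eqP => ei; rewrite -ei eS in iS.
Qed.

Definition dl (S D : {set I}) (x : I) : bool := (x \notin S) && (e \in S) && (x \in D).

Lemma step_Gp S D x : deleg_step (Gp S D) x = if dl S D x then e else x.
Proof.
rewrite /deleg_step /Gp /dl; case: ifP => xS //=; case: ifP => //=.
Qed.

Lemma dl_e S D : dl S D e = false.
Proof. by rewrite /dl; case: (e \in S); rewrite ?andbF. Qed.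

Lemma iter_Gp (S D : {set I}) k (x : I) : iter k.+1 (deleg_step (Gp S D)) x = if dl S D x then e else x.
Proof.
elim: k => [|k IH]; first by rewrite /= step_Gp.
by rewrite iterS IH; case: ifP => h; rewrite step_Gp ?dl_e // h.
Qed.

Lemma N_pos : (0 < N)%N.
Proof. exact: leq_ltn_trans (leq0n e) (ltn_ord e). Qed.

Lemma guru_Gp (S D : {set I}) (x : I) : guru (Gp S D) x = if dl S D x then e else x.
Proof.
have : forall k, (0 < k)%N -> iter k (deleg_step (Gp S D)) x = if dl S D x then e else x.
  by case=> // k _; rewrite iter_Gp.
by move/(_ N N_pos).
Qed.

Lemma isS_Gp (S D : {set I}) x : isS (Gp S D x) = (x \in S).
Proof. by rewrite /Gp; case: ifP => //; case: ifP. Qed.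

Lemma wtP_Gp (S D : {set I}) (g : I) : D \subset ~: S ->
  wtP (Gp S D) g = if g == e then (if e \in S then #|D|.+1 else 0%N) else (g \in S : nat).
Proof.
move=> DS; rewrite /wtP isS_Gp.
case: (eqVneq g e) => [->|ne].
  case eS: (e \in S) => /=; last by [].
  have -> : [set i | guru (Gp S D) i == e] = e |: D.
    apply/setP => i; rewrite !inE guru_Gp /dl eS andbT.
    case: (eqVneq i e) => [->|ie] /=; first by rewrite if_same eqxx.
    case iD: (i \in D); last by rewrite andbF (negbTE ie).
    by move/subsetP: DS => /(_ i iD); rewrite inE => ->; rewrite /= eqxx.
  rewrite cardsU1; have -> : e \notin D.
    by apply/negP => /(subsetP DS); rewrite inE eS.
  by [].
case gS: (g \in S) => /=; last by [].
have -> : [set i | guru (Gp S D) i == g] = [set g].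
  apply/setP => i; rewrite !inE guru_Gp; case: ifP => h; last by [].
  rewrite eq_sym (negbTE ne); apply/esym/negbTE; apply/eqP => ig.
  by move: h; rewrite /dl ig gS.
by rewrite cards1.
Qed.

Lemma held_Gp (S D : {set I}) (i : I) : i != e -> (held (Gp S D) i <= 1)%N.
Proof.
move=> ie; rewrite /held.
have -> : [set j | (j != i) && [exists k : I, iter k.+1 (deleg_step (Gp S D)) j == i]] = set0.
  apply/setP => j; rewrite !inE; apply/negbTE; rewrite negb_and negbK.
  case: (eqVneq j i) => [//|ji]; rewrite orFb; apply/existsPn => k; rewrite iter_Gp.
  by case: ifP => _; [rewrite eq_sym | ].
by rewrite cards0 addn0; case: (is_deleg _).
Qed.

End Prof.

Unset Implicit Arguments.

Theorem lemma7 (R : realFieldType) (N : nat) (q r : R) (e : 'I_N) :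
  odd N -> 1 / 2%:R < q -> q < 1 -> q < r -> r < 1 ->
  exists P : profile N,
    [/\ valid_profile P,
        (forall P' : profile N, valid_profile P' ->
           success (sec_prec q r e) P' <= success (sec_prec q r e) P)
      & (forall i : 'I_N, i != e -> P i <> Abstain -> (held P i <= 1)%N)].
Proof.
move=> _ hq hq1 hqr hr1.
have hq' : 2^-1 < q by rewrite -div1r.
have [x hx] := fin_max (set0, set0)
  (fun x : {set 'I_N} * {set 'I_N} => success (sec_prec q r e) (Gp e x.1 x.2)).
exists (Gp e x.1 x.2); split.
- exact: Gp_valid.
- move=> P' _.
  have [H1 H2 H3] := wtP_props P'.
  set V := [set g | isS (P' g)] in H1 H2 H3.
  rewrite success_eq; apply: le_trans (weight_main e hq' hq1 hqr hr1 H1 H2 H3) _.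
  set T := V :|: [set e].
  set m := #|[pred i | i != e & i \in T]|.
  set c := cch (okq q r) (N - m) m.
  have [D [DV cD]] : exists D : {set 'I_N}, D \subset ~: V /\ (e \in V -> #|D| = (c - 1)%N).
    case: (boolP (e \in V)) => eV; last by exists set0; rewrite sub0set.
    have hT : T = V by apply/setUidPl; rewrite sub1set.
    have hm : (m.+1 = #|V|)%N.
      by rewrite /m -hT (cardD1 e T) /T !inE eqxx orbT.
    have hVN : (#|V| + #|~: V| = N)%N by rewrite cardsC card_ord.
    have K1 : (1 <= N - m)%N by lia.
    have [_ cK _ _] := cch_spec (okqS hq' hq1 hqr hr1) (okq1 hq' hq1 hqr hr1) m K1.
    have hk : (c - 1 <= #|~: V|)%N by rewrite -/c; lia.
    by have [B [BA cB]] := subset_card hk; exists B.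
  have := hx (V, D); rewrite /= success_eq => h; apply: le_trans h.
  rewrite le_eqVlt; apply/orP; left; apply/eqP; apply: successW_ext => g.
  rewrite wtP_Gp //; case: (g =P e) => [eg|/eqP ne].
    subst g; case: ifP => // eV; rewrite cD //.
    have K1 : (1 <= N - m)%N.
      suff : (m < N)%N by lia.
      rewrite /m -[X in (_ < X)%N]card_ord; apply: proper_card; apply/properP; split.
        by apply/subsetP => i.
      by exists e; rewrite // inE eqxx.
    have [c1 _ _ _] := cch_spec (okqS hq' hq1 hqr hr1) (okq1 hq' hq1 hqr hr1) m K1.
    by rewrite -/c; lia.
  by rewrite /T !inE (negbTE ne) orbF.
- by move=> i ie _; apply: held_Gp.
Qed.
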